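(* Let $K$ be either of the (two non-isomorphic) $2$-uniform tilings of the plane whose vertex types are $[3^6]$ and $[3^3,4^2]$. If $X$ is a map on the torus that is a quotient $X=K/\Gamma$ of $K$, then the vertices of $X$ form exactly $2$ orbits under ${\rm Aut}(X)$.
   Context: A map is a polyhedral map: a cellular embedding of a connected graph in a closed surface such that the intersection of any two distinct faces is empty, a single vertex, or a single edge. For a vertex $u$, the faces containing $u$ form a cyclic sequence (the face-cycle at $u$); if this cyclic sequence consists of consecutive blocks of $n_1$ $p_1$-gons, then $n_2$ $p_2$-gons, ..., then $n_k$ $p_k$-gons, with cyclically consecutive $p_i$ distinct, then $u$ is said to have type $[p_1^{n_1},\dots,p_k^{n_k}]$ (defined up to cyclic shift and reversal). A $2$-uniform tiling is an edge-to-edge tiling of the Euclidean plane $\mathbb{R}^2$ by regular polygons whose symmetry group has exactly two orbits on the set of vertices; viewed as a map on the plane, its vertices have (at most) two types, listed as $[W;Z]$. (Up to isomorphism there are exactly $20$ such tilings.) For a map $K$ on the plane, a quotient of $K$ on the torus is a map $X$ on the torus together with a polyhedral covering map $\eta:K\to X$ with $X=K/\Gamma$, where $\Gamma\le {\rm Aut}(K)$ is a subgroup acting without fixed vertices, edges or faces and $K/\Gamma$ is homeomorphic to the torus. ${\rm Aut}(X)$ denotes the automorphism group of the map $X$, acting on its vertex set $V(X)$. *)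

(* Defs.v *)
From mathcomp Require Import all_boot all_order all_algebra all_fingroup.
Set Implicit Arguments. Unset Strict Implicit. Unset Printing Implicit Defensive.
Import GRing.Theory Num.Theory.
Local Open Scope ring_scope.

(* A face is given by its boundary cycle: a duplicate-free sequence of *)
(* vertices, read cyclically.                                          *)

Definition dedge (T : eqType) (f : seq T) (u v : T) : bool :=
  (u \in f) && (next f u == v).

Definition uedge (T : eqType) (f : seq T) (u v : T) : bool :=
  dedge f u v || dedge f v u.

Definition cyc_eq (T : eqType) (s t : seq T) : Prop :=
  exists n : nat, t = rot n s \/ t = rot n (rev s).

Section FinMap.
Variables (V : finType) (n : nat) (face : 'I_n -> seq V).

Definition fadj (u v : V) : bool := [exists i, uedge (face i) u v].

Definition link_rel (v : V) (i j : 'I_n) : bool :=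
  [&& v \in face i, v \in face j &
      [exists w, uedge (face i) v w && uedge (face j) v w]].

Definition orient (o : 'I_n -> bool) (i : 'I_n) : seq V :=
  if o i then face i else rev (face i).

Definition is_torus_polyhedral_map : Prop :=
  (forall i, uniq (face i) /\ (3 <= size (face i))%N) /\
  (forall i j, perm_eq (face i) (face j) -> i = j) /\
  (forall u v, fadj u v -> #|[set i | uedge (face i) u v]| = 2%N) /\
  (* every vertex lies on a face, and the faces around a vertex form a
     single cycle (closed surface) *)
  (forall v, exists i, v \in face i) /\
  (forall v i j, v \in face i -> v \in face j -> connect (link_rel v) i j) /\
  (forall u v, connect fadj u v) /\
  (forall i j, i != j ->
     let C := [set w | (w \in face i) && (w \in face j)] in
     (#|C| <= 1)%N \/
     exists u v, [/\ C = [set u; v], uedge (face i) u v & uedge (face j) u v]) /\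
  (exists o : 'I_n -> bool, forall i j u v, i != j ->
     dedge (orient o i) u v -> dedge (orient o j) u v -> False) /\
  (* Euler characteristic 0:  2 (V + F) = 2 E *)
  (2 * (#|V| + n) = #|[set p : V * V | fadj p.1 p.2]|)%N.

Definition fin_map_aut (a : {perm V}) : Prop :=
  (forall u v, fadj (a u) (a v) = fadj u v) /\
  (forall i, exists j, perm_eq (map a (face i)) (face j)).

Definition same_aut_orbit (u v : V) : Prop :=
  exists a : {perm V}, fin_map_aut a /\ a u = v.

End FinMap.

(* Vertices are Z x Z: (i, j) is the i-th vertex on the j-th horizontal *)
(* line.  The strip between lines j and j+1 is a strip of squares when  *)
(* j = 0 mod (k+1) and a strip of triangles otherwise, so square strips *)
(* are separated by k strips of triangles.  Triangle strips are given   *)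
(* in sheared coordinates.  k = 2 and k = 3 give the two tilings.       *)
Definition vtx := (int * int)%type.

Definition sq_strip (k : nat) (j : int) : bool := ((j %% (k.+1)%:Z)%Z == 0).

Definition tiling_face (k : nat) (f : seq vtx) : Prop :=
  exists i j : int,
    if sq_strip k j then f = [:: (i, j); (i + 1, j); (i + 1, j + 1); (i, j + 1)]
    else f = [:: (i, j); (i + 1, j); (i, j + 1)] \/
         f = [:: (i + 1, j); (i + 1, j + 1); (i, j + 1)].

Definition tiling_adj (k : nat) (u v : vtx) : Prop :=
  exists f, tiling_face k f /\ uedge f u v.

Definition tiling_faceset (k : nat) (s : seq vtx) : Prop :=
  exists f, tiling_face k f /\ perm_eq s f.

Definition tiling_aut (k : nat) (a : vtx -> vtx) : Prop :=
  exists b : vtx -> vtx, [/\ cancel a b, cancel b a,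
    (forall u v, tiling_adj k u v <-> tiling_adj k (a u) (a v)) &
    (forall s, tiling_faceset k s <-> tiling_faceset k (map a s))].

Definition free_aut_subgroup (k : nat) (G : (vtx -> vtx) -> Prop) : Prop :=
  [/\ G (fun x => x),
      (forall a b, G a -> G b -> G (fun x => a (b x))),
      (forall a, G a -> exists b, [/\ G b, cancel a b & cancel b a]),
      (forall a, G a -> tiling_aut k a) &
      (forall a, G a ->
         ((exists u, a u = u) \/
          (exists u v, [/\ tiling_adj k u v, a u = v & a v = u]) \/
          (exists f, tiling_face k f /\ perm_eq (map a f) f)) ->
         forall x, a x = x)].

(* eta : V(K) -> V(X) exhibits the finite map (V, face) as K / G:
   vertices, edges and faces of X are the G-orbits of those of K,
   with faces of X the images of faces of K. *)
Definition is_quotient_map (k : nat) (G : (vtx -> vtx) -> Prop)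
    (V : finType) (n : nat) (face : 'I_n -> seq V) (eta : vtx -> V) : Prop :=
  (forall x : V, exists u, eta u = x) /\
  (forall u v, eta u = eta v <-> exists a, G a /\ a u = v) /\
  (forall a b c d, tiling_adj k a b -> tiling_adj k c d ->
     ([set eta a; eta b] = [set eta c; eta d] <->
      exists g, G g /\ ((g a = c /\ g b = d) \/ (g a = d /\ g b = c)))) /\
  (forall f, tiling_face k f -> exists i, cyc_eq (map eta f) (face i)) /\
  (forall i, exists f, tiling_face k f /\ cyc_eq (map eta f) (face i)) /\
  (forall f g, tiling_face k f -> tiling_face k g ->
     (perm_eq (map eta f) (map eta g) <->
      exists a, G a /\ perm_eq (map a f) g)).

(* Main.v *)
Require Import Defs.
From mathcomp Require Import all_boot all_order all_algebra.
From mathcomp Require Import all_fingroup zify.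
Set Implicit Arguments. Unset Strict Implicit. Unset Printing Implicit Defensive.
Import GRing.Theory Num.Theory.
Local Open Scope ring_scope.

Section ListLemmas.
Variable T : eqType.
Implicit Types a b c d u v x y : T.

Lemma dedge3E a b c u v : dedge [:: a; b; c] u v ->
  [\/ u = a /\ v = b, u = b /\ v = c | u = c /\ v = a].
Proof.
rewrite /dedge /= !inE; case/andP=> Hu.
case: (u =P a) => [->/eqP->|/eqP/negbTE ua]; first by constructor 1.
case: (u =P b) => [->/eqP->|/eqP/negbTE ub]; first by constructor 2.
case: (u =P c) => [->/eqP->|/eqP/negbTE uc]; first by constructor 3.
by move: Hu; rewrite ua ub uc.
Qed.

Lemma dedge4E a b c d u v : dedge [:: a; b; c; d] u v ->
  [\/ u = a /\ v = b, u = b /\ v = c, u = c /\ v = d | u = d /\ v = a].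
Proof.
rewrite /dedge /= !inE; case/andP=> Hu.
case: (u =P a) => [->/eqP->|/eqP/negbTE ua]; first by constructor 1.
case: (u =P b) => [->/eqP->|/eqP/negbTE ub]; first by constructor 2.
case: (u =P c) => [->/eqP->|/eqP/negbTE uc]; first by constructor 3.
case: (u =P d) => [->/eqP->|/eqP/negbTE ud]; first by constructor 4.
by move: Hu; rewrite ua ub uc ud.
Qed.

Lemma dedge3I a b c : uniq [:: a; b; c] ->
  [/\ dedge [:: a; b; c] a b, dedge [:: a; b; c] b c & dedge [:: a; b; c] c a].
Proof.
rewrite /= !inE !negb_or => /and3P[/andP[ab ac] bc _].
rewrite /dedge /= !inE !eqxx /= ?orbT /=.
by rewrite [b == a]eq_sym [c == a]eq_sym [c == b]eq_sym (negbTE ab) (negbTE ac) (negbTE bc) !eqxx.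
Qed.

Lemma dedge4I a b c d : uniq [:: a; b; c; d] ->
  [/\ dedge [:: a; b; c; d] a b, dedge [:: a; b; c; d] b c,
      dedge [:: a; b; c; d] c d & dedge [:: a; b; c; d] d a].
Proof.
rewrite /= !inE !negb_or => /and4P[/and3P[ab ac ad] /andP[bc bd] cd _].
rewrite /dedge /= !inE !eqxx /= ?orbT /=.
rewrite [b == a]eq_sym [c == a]eq_sym [c == b]eq_sym [d == a]eq_sym [d == b]eq_sym [d == c]eq_sym.
by rewrite (negbTE ab) (negbTE ac) (negbTE bc) (negbTE ad) (negbTE bd) (negbTE cd) !eqxx.
Qed.

Lemma dedge_rot n s x y : uniq s -> dedge (rot n s) x y = dedge s x y.
Proof. by move=> Us; rewrite /dedge mem_rot next_rot. Qed.

Lemma dedge_rev s x y : uniq s -> dedge (rev s) x y = dedge s y x.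
Proof.
move=> Us; rewrite /dedge mem_rev next_rev //.
apply/andP/andP => [[xs /eqP <-]|[ys /eqP <-]].
  by rewrite mem_prev xs next_prev.
by rewrite mem_next ys prev_next.
Qed.

Lemma dedge_fun s x y y' : dedge s x y -> dedge s x y' -> y = y'.
Proof. by rewrite /dedge => /andP[_ /eqP <-] /andP[_ /eqP <-]. Qed.

Lemma dedge_mem s x y : dedge s x y -> x \in s /\ y \in s.
Proof. by rewrite /dedge => /andP[xs /eqP <-]; rewrite mem_next xs. Qed.

End ListLemmas.

Definition sqF (i j : int) : seq vtx := [:: (i, j); (i + 1, j); (i + 1, j + 1); (i, j + 1)].
Definition trA (i j : int) : seq vtx := [:: (i, j); (i + 1, j); (i, j + 1)].
Definition trB (i j : int) : seq vtx := [:: (i + 1, j); (i + 1, j + 1); (i, j + 1)].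

Definition Kadj (k : nat) (u v : vtx) : Prop :=
  (v.2 = u.2 /\ (v.1 = u.1 + 1 \/ v.1 = u.1 - 1)) \/
  (v.2 = u.2 + 1 /\ (v.1 = u.1 \/ (~~ sq_strip k u.2 /\ v.1 = u.1 - 1))) \/
  (v.2 = u.2 - 1 /\ (v.1 = u.1 \/ (~~ sq_strip k (u.2 - 1) /\ v.1 = u.1 + 1))).

Ltac dsplit := repeat match goal with
  | H : _ \/ _ |- _ => destruct H
  | H : _ /\ _ |- _ => destruct H
  | H : ?x = _ |- _ => is_var x; subst x
  end.
Ltac sred := repeat match goal with
 | |- context [sq_strip ?k ?x] =>
     let b := eval vm_compute in (sq_strip k x) in
     lazymatch b with
     | true => change (sq_strip k x) with true
     | false => change (sq_strip k x) with false
     | _ => case: (sq_strip k x)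
     end
 end; rewrite /=.
Ltac revall := repeat match goal with H : _ |- _ => revert H end.
Ltac kadj := rewrite /Kadj /=; first
 [ left; split; [lia | first [left; lia | right; lia]]
 | right; left; split; [lia | first [left; lia | right; split; [done | lia]]]
 | right; right; split; [lia | first [left; lia | right; split; [done | lia]]] ].
Ltac klia := intros; dsplit; revall; sred; intros; dsplit; lia.

Lemma tiling_faceE k f : tiling_face k f ->
  (exists i j, sq_strip k j /\ f = sqF i j) \/
  (exists i j, ~~ sq_strip k j /\ (f = trA i j \/ f = trB i j)).
Proof.
case=> i [j]; case: ifP => Sj H.
  by left; exists i, j.
by right; exists i, j; rewrite Sj.
Qed.

Lemma sqF_face k i j : sq_strip k j -> tiling_face k (sqF i j).
Proof. by move=> Sj; exists i, j; rewrite Sj. Qed.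
Lemma trA_face k i j : ~~ sq_strip k j -> tiling_face k (trA i j).
Proof. by move=> Sj; exists i, j; rewrite (negbTE Sj); left. Qed.
Lemma trB_face k i j : ~~ sq_strip k j -> tiling_face k (trB i j).
Proof. by move=> Sj; exists i, j; rewrite (negbTE Sj); right. Qed.

Lemma sqF_uniq i j : uniq (sqF i j).
Proof. rewrite /= !inE !xpair_eqE /=; lia. Qed.
Lemma trA_uniq i j : uniq (trA i j).
Proof. rewrite /= !inE !xpair_eqE /=; lia. Qed.
Lemma trB_uniq i j : uniq (trB i j).
Proof. rewrite /= !inE !xpair_eqE /=; lia. Qed.

Lemma tiling_face_uniq k f : tiling_face k f -> uniq f.
Proof.
case/tiling_faceE => [[i [j [_ ->]]]|[i [j [_ [->|->]]]]];
  [exact: sqF_uniq | exact: trA_uniq | exact: trB_uniq].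
Qed.

Lemma Kadj_sym k u v : Kadj k u v -> Kadj k v u.
Proof.
case: u v => [i j] [i' j']; rewrite /Kadj /=.
have E1 : j' = j + 1 -> j = j' - 1 by lia.
have E2 : j' = j - 1 -> j' = j - 1 by [].
case=> [[-> [->|->]]|[[-> [->|[S ->]]]|[-> [->|[S ->]]]]];
 try (left; split; [done|lia]).
- by right; right; split; [lia|left].
- by right; right; split; [lia|right; split; [rewrite (_ : j + 1 - 1 = j) //; lia|lia]].
- by right; left; split; [lia|left].
- by right; left; split; [lia|right; split; [done|lia]].
Qed.

Section Adj.
Variable k : nat.

Lemma face_adj f u v : tiling_face k f -> uedge f u v -> Kadj k u v.
Proof.
move=> Hf; wlog: u v / dedge f u v.
  move=> W /orP[H|H]; first by apply: W => //; rewrite /uedge H.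
  by apply: Kadj_sym; apply: W => //; rewrite /uedge H.
move=> H _; case/tiling_faceE: Hf => [[i [j [Sj Ef]]]|[i [j [Sj [Ef|Ef]]]]];
 subst f.
- case/dedge4E: H => [[-> ->]|[-> ->]|[-> ->]|[-> ->]]; rewrite /Kadj /= ?addrK; lia.
- case/dedge3E: H => [[-> ->]|[-> ->]|[-> ->]]; rewrite /Kadj /= ?addrK; lia.
- case/dedge3E: H => [[-> ->]|[-> ->]|[-> ->]]; rewrite /Kadj /= ?addrK; lia.
Qed.

Lemma adj_face u v : Kadj k u v -> exists f, tiling_face k f /\ uedge f u v.
Proof.
wlog: u v / (v.2 = u.2 /\ v.1 = u.1 + 1) \/ (v.2 = u.2 + 1 /\ (v.1 = u.1 \/ (~~ sq_strip k u.2 /\ v.1 = u.1 - 1))).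
  move=> W H; move: (H); rewrite /Kadj.
  case=> [[E [E'|E']]|[E|[E [E'|[S E']]]]].
  - by apply: W => //; left.
  - have [f [Hf Hu]] : exists f, tiling_face k f /\ uedge f v u.
      by apply: W; [left; split; lia | apply: Kadj_sym].
    by exists f; split => //; rewrite /uedge orbC.
  - by apply: W => //; right.
  - have [f [Hf Hu]] : exists f, tiling_face k f /\ uedge f v u.
      by apply: W; [right; split; [lia|left; lia] | apply: Kadj_sym].
    by exists f; split => //; rewrite /uedge orbC.
  - have [f [Hf Hu]] : exists f, tiling_face k f /\ uedge f v u.
      apply: W; [right; split; [lia|right; split; [|lia]] | apply: Kadj_sym] => //.
      by rewrite (_ : v.2 = u.2 - 1) //.
    by exists f; split => //; rewrite /uedge orbC.
case: u v => [i j] [i' j'] /=.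
case=> [[-> ->]|[-> [->|[S ->]]]] _.
- case Sj: (sq_strip k j).
    exists (sqF i j); split; first exact: sqF_face.
    by case/dedge4I: (sqF_uniq i j) => H _ _ _; rewrite /uedge H.
  exists (trA i j); split; first by apply: trA_face; rewrite Sj.
  by case/dedge3I: (trA_uniq i j) => H _ _; rewrite /uedge H.
- case Sj: (sq_strip k j).
    exists (sqF i j); split; first exact: sqF_face.
    by case/dedge4I: (sqF_uniq i j) => _ _ _ H; rewrite /uedge H orbT.
  exists (trA i j); split; first by apply: trA_face; rewrite Sj.
  by case/dedge3I: (trA_uniq i j) => _ _ H; rewrite /uedge H orbT.
- exists (trB (i - 1) j); split; first exact: trB_face.
  case/dedge3I: (trB_uniq (i - 1) j) => _ _ H; rewrite /uedge.
  by move: H; rewrite /trB (_ : i - 1 + 1 = i) ?subrK // => ->; rewrite orbT.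
Qed.

Lemma adjP u v : tiling_adj k u v <-> Kadj k u v.
Proof.
split; first by case=> f [Hf Hu]; exact: face_adj Hu.
by move/adj_face.
Qed.
End Adj.

Lemma int_ind2 (P : int -> Prop) : P 0 -> (forall i, P i -> P (i + 1)) ->
  (forall i, P i -> P (i - 1)) -> forall i, P i.
Proof.
move=> P0 Hu Hd; case=> n.
  elim: n => [|n IH]; first exact: P0.
  have -> : Posz n.+1 = Posz n + 1 by lia.
  exact: Hu.
elim: n => [|n IH].
  have -> : Negz 0 = 0 - 1 by lia.
  exact: Hd.
have -> : Negz n.+1 = Negz n - 1 by lia.
exact: Hd.
Qed.

Lemma pair_neq (a b a0 b0 : int) : (a, b) <> (a0, b0) -> ~ (a = a0 /\ b = b0).
Proof. by move=> H [E1 E2]; apply: H; rewrite E1 E2. Qed.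

Lemma pair_eqI (a b a0 b0 : int) : a = a0 -> b = b0 -> (a, b) = (a0, b0).
Proof. by move=> -> ->. Qed.

Ltac pneq := repeat match goal with H : (_, _) <> (_, _) |- _ => move/pair_neq: H => H end.

Lemma pair_neqI (a b a0 b0 : int) : ~ (a = a0 /\ b = b0) -> (a, b) <> (a0, b0).
Proof. by move=> H E; apply: H; case: E => -> ->. Qed.


Lemma ar_c11 k (hk : k = 2%N \/ k = 3%N) a b : Kadj k (1, 0) (a, b) -> Kadj k (0, 1) (a, b) -> ~ (a = 0 /\ b = 0) ->
  (a = 1) /\ (b = 1).
Proof. rewrite /Kadj /=; case: hk => ->; klia. Qed.

Lemma ar_Qup k (hk : k = 2%N \/ k = 3%N) i a b a' b' : Kadj k (i + 1, 0) (a, b) -> Kadj k (i + 1, 1) (a', b') ->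
  Kadj k (a, b) (a', b') -> ~ (a = i + 1 /\ b = 1) -> ~ (a = i /\ b = 0) ->
  ~ (a' = i + 1 /\ b' = 0) -> ~ (a' = i /\ b' = 1) ->
  (a = i + 1 + 1) /\ (b = 0) /\ (a' = i + 1 + 1) /\ (b' = 1).
Proof. rewrite /Kadj /=; case: hk => -> A B C *; move: C; sred; dsplit; try (exfalso; lia);
 klia. Qed.

Lemma ar_Qdn k (hk : k = 2%N \/ k = 3%N) i a b a' b' : Kadj k (i, 0) (a, b) -> Kadj k (i, 1) (a', b') ->
  Kadj k (a, b) (a', b') -> ~ (a = i + 1 /\ b = 0) -> ~ (a = i /\ b = 1) ->
  ~ (a' = i + 1 /\ b' = 1) -> ~ (a' = i /\ b' = 0) ->
  (a = i - 1) /\ (b = 0) /\ (a' = i - 1) /\ (b' = 1).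
Proof. rewrite /Kadj /=; case: hk => -> A B C *; move: C; sred; dsplit; try (exfalso; lia);
 klia. Qed.

Lemma ar_Rup k (hk : k = 2%N \/ k = 3%N) i j a b : Kadj k (i, j + 1) (a, b) ->
  (~~ sq_strip k (j + 1) -> Kadj k (i + 1, j + 1) (a, b)) -> b <> j -> b <> j + 1 ->
  (a = i) /\ (b = j + 1 + 1).
Proof. rewrite /Kadj /=; case: hk => ->; klia. Qed.

Lemma ar_Rdn k (hk : k = 2%N \/ k = 3%N) i j a b : Kadj k (i, j) (a, b) ->
  (~~ sq_strip k (j - 1) -> Kadj k (i - 1, j) (a, b)) -> b <> j -> b <> j + 1 ->
  (a = i) /\ (b = j - 1).
Proof. rewrite /Kadj /=; case: hk => ->; klia. Qed.



Section Rigid.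
Variable k : nat.
Hypothesis hk : k = 2%N \/ k = 3%N.
Variables c c' : vtx -> vtx.
Hypothesis cK : cancel c c'.
Hypothesis cadj : forall u v, Kadj k u v -> Kadj k (c u) (c v).
Hypothesis c00 : c (0, 0) = (0, 0).
Hypothesis c10 : c (1, 0) = (1, 0).
Hypothesis c01 : c (0, 1) = (0, 1).

Let cinj : injective c := can_inj cK.

Lemma rigid_all : forall x, c x = x.
Proof.
have c11 : c (1, 1) = (1, 1).
  have A1 : Kadj k (c (1, 0)) (c (1, 1)) by apply: cadj; kadj.
  have A2 : Kadj k (c (0, 1)) (c (1, 1)) by apply: cadj; kadj.
  rewrite c10 in A1; rewrite c01 in A2.
  have N : c (1, 1) <> (0, 0) by rewrite -c00 => /cinj.
  move: A1 A2 N; case: (c (1, 1)) => a b A1 A2 N; pneq.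
  by case: (ar_c11 hk A1 A2 N) => -> ->.

have fixne : forall x y, c y = y -> x <> y -> c x <> y.
  by move=> x y Hy Nxy E; apply: Nxy; apply: cinj; rewrite E Hy.
have adjc : forall u v, c u = u -> Kadj k u v -> Kadj k u (c v).
  by move=> u v Hu H; rewrite -Hu; apply: cadj.
pose Q i := [/\ c (i, 0) = (i, 0), c (i, 1) = (i, 1), c (i + 1, 0) = (i + 1, 0)
              & c (i + 1, 1) = (i + 1, 1)].
have Qall : forall i, Q i.
  apply: int_ind2; first by split; rewrite ?add0r.
  - move=> i [H1 H2 H3 H4].
    suff [E1 E2] : c (i + 1 + 1, 0) = (i + 1 + 1, 0) /\ c (i + 1 + 1, 1) = (i + 1 + 1, 1) by split.
    have A : Kadj k (i + 1, 0) (c (i + 1 + 1, 0)) by apply: adjc H3 _; kadj.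
    have B : Kadj k (i + 1, 1) (c (i + 1 + 1, 1)) by apply: adjc H4 _; kadj.
    have C : Kadj k (c (i + 1 + 1, 0)) (c (i + 1 + 1, 1)) by apply: cadj; kadj.
    have N1 : c (i + 1 + 1, 0) <> (i + 1, 1) by apply: fixne H4 _; apply: pair_neqI; lia.
    have N2 : c (i + 1 + 1, 0) <> (i, 0) by apply: fixne H1 _; apply: pair_neqI; lia.
    have N3 : c (i + 1 + 1, 1) <> (i + 1, 0) by apply: fixne H3 _; apply: pair_neqI; lia.
    have N4 : c (i + 1 + 1, 1) <> (i, 1) by apply: fixne H2 _; apply: pair_neqI; lia.
    move: A B C N1 N2 N3 N4; case: (c (i + 1 + 1, 0)) => a b; case: (c (i + 1 + 1, 1)) => a' b'.
    move=> A B C N1 N2 N3 N4; pneq.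
    by case: (ar_Qup hk A B C N1 N2 N3 N4) => [-> [-> [-> ->]]].
  - move=> i [H1 H2 H3 H4]; rewrite /Q subrK.
    suff [E1 E2] : c (i - 1, 0) = (i - 1, 0) /\ c (i - 1, 1) = (i - 1, 1) by split.
    have A : Kadj k (i, 0) (c (i - 1, 0)) by apply: adjc H1 _; kadj.
    have B : Kadj k (i, 1) (c (i - 1, 1)) by apply: adjc H2 _; kadj.
    have C : Kadj k (c (i - 1, 0)) (c (i - 1, 1)) by apply: cadj; kadj.
    have N1 : c (i - 1, 0) <> (i + 1, 0) by apply: fixne H3 _; apply: pair_neqI; lia.
    have N2 : c (i - 1, 0) <> (i, 1) by apply: fixne H2 _; apply: pair_neqI; lia.
    have N3 : c (i - 1, 1) <> (i + 1, 1) by apply: fixne H4 _; apply: pair_neqI; lia.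
    have N4 : c (i - 1, 1) <> (i, 0) by apply: fixne H1 _; apply: pair_neqI; lia.
    move: A B C N1 N2 N3 N4; case: (c (i - 1, 0)) => a b; case: (c (i - 1, 1)) => a' b'.
    move=> A B C N1 N2 N3 N4; pneq.
    by case: (ar_Qdn hk A B C N1 N2 N3 N4) => [-> [-> [-> ->]]].
pose R j := forall i, c (i, j) = (i, j) /\ c (i, j + 1) = (i, j + 1).
have Rall : forall j, R j.
  apply: int_ind2.
  - by move=> i; case: (Qall i).
  - move=> j Rj i; split; first by case: (Rj i).
    have A : Kadj k (i, j + 1) (c (i, j + 1 + 1)).
      by apply: adjc; [case: (Rj i)| kadj].
    have B : ~~ sq_strip k (j + 1) -> Kadj k (i + 1, j + 1) (c (i, j + 1 + 1)).
      by move=> S; apply: adjc; [case: (Rj (i + 1))| kadj].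
    have Hb : forall a b, c (i, j + 1 + 1) = (a, b) -> b <> j /\ b <> j + 1.
      move=> a b E; split=> Eb.
        have F : c (a, b) = (a, b) by rewrite Eb; case: (Rj a).
        have : (i, j + 1 + 1) = (a, b) by apply: cinj; rewrite E F.
        by case=> _ E'; lia.
      have F : c (a, b) = (a, b) by rewrite Eb; case: (Rj a).
      have : (i, j + 1 + 1) = (a, b) by apply: cinj; rewrite E F.
      by case=> _ E'; lia.
    move: A B Hb; case: (c (i, j + 1 + 1)) => a b A B Hb.
    case: (Hb a b erefl) => Hb1 Hb2.
    by case: (ar_Rup hk A B Hb1 Hb2) => -> ->.
  - move=> j Rj i; rewrite subrK; split; last by case: (Rj i).
    have A : Kadj k (i, j) (c (i, j - 1)).
      by apply: adjc; [case: (Rj i)| kadj].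
    have B : ~~ sq_strip k (j - 1) -> Kadj k (i - 1, j) (c (i, j - 1)).
      by move=> S; apply: adjc; [case: (Rj (i - 1))| kadj].
    have Hb : forall a b, c (i, j - 1) = (a, b) -> b <> j /\ b <> j + 1.
      move=> a b E; split=> Eb.
        have F : c (a, b) = (a, b) by rewrite Eb; case: (Rj a).
        have : (i, j - 1) = (a, b) by apply: cinj; rewrite E F.
        by case=> _ E'; lia.
      have F : c (a, b) = (a, b) by rewrite Eb; case: (Rj a).
      have : (i, j - 1) = (a, b) by apply: cinj; rewrite E F.
      by case=> _ E'; lia.
    move: A B Hb; case: (c (i, j - 1)) => a b A B Hb.
    case: (Hb a b erefl) => Hb1 Hb2.
    by case: (ar_Rdn hk A B Hb1 Hb2) => -> ->.
by case=> i j; case: (Rall j i).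
Qed.
End Rigid.

Definition Tm (p q : int) (x : vtx) : vtx := (x.1 + p, x.2 + q).
Definition Rm (p q : int) (x : vtx) : vtx := (p - x.1, q - x.2).

Section Maps.
Variable k : nat.
Hypothesis hk : k = 2%N \/ k = 3%N.

Lemma ST q j : (q %% (k.+1)%:Z)%Z = 0 -> sq_strip k (j + q) = sq_strip k j.
Proof. rewrite /sq_strip; case: hk => -> H; lia. Qed.
Lemma ST' q j : (q %% (k.+1)%:Z)%Z = 0 -> sq_strip k (j + q - 1) = sq_strip k (j - 1).
Proof. rewrite /sq_strip; case: hk => -> H; lia. Qed.
Lemma SR1 q j : (q %% (k.+1)%:Z)%Z = 1 -> sq_strip k (q - j - 1) = sq_strip k j.
Proof. rewrite /sq_strip; case: hk => -> H; lia. Qed.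
Lemma SR2 q j : (q %% (k.+1)%:Z)%Z = 1 -> sq_strip k (q - j) = sq_strip k (j - 1).
Proof. rewrite /sq_strip; case: hk => -> H; lia. Qed.

Lemma T_adj1 p q u v : (q %% (k.+1)%:Z)%Z = 0 -> Kadj k u v -> Kadj k (Tm p q u) (Tm p q v).
Proof.
case: u v => [i j] [i' j'] Hq; rewrite /Kadj /Tm /= (ST j Hq) (ST' j Hq).
case: (sq_strip k j); case: (sq_strip k (j - 1)) => /=; lia.
Qed.

Lemma R_adj1 p q u v : (q %% (k.+1)%:Z)%Z = 1 -> Kadj k u v -> Kadj k (Rm p q u) (Rm p q v).
Proof.
case: u v => [i j] [i' j'] Hq; rewrite /Kadj /Rm /= (SR1 j Hq) (SR2 j Hq).
case: (sq_strip k j); case: (sq_strip k (j - 1)) => /=; lia.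
Qed.

Lemma TmK p q : cancel (Tm p q) (Tm (- p) (- q)).
Proof. by case=> i j; rewrite /Tm /= !addrK. Qed.
Lemma TmK' p q : cancel (Tm (- p) (- q)) (Tm p q).
Proof. by case=> i j; rewrite /Tm /= !subrK. Qed.
Lemma RmK p q : involutive (Rm p q).
Proof. by case=> i j; rewrite /Rm /= !subKr. Qed.

Lemma Tmod q : (q %% (k.+1)%:Z)%Z = 0 -> ((- q) %% (k.+1)%:Z)%Z = 0.
Proof. case: hk => -> H; lia. Qed.

Lemma T_adj p q u v : (q %% (k.+1)%:Z)%Z = 0 -> Kadj k u v <-> Kadj k (Tm p q u) (Tm p q v).
Proof.
move=> Hq; split; first exact: T_adj1.
by move/(@T_adj1 (- p) (- q) _ _ (Tmod Hq)); rewrite !TmK.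
Qed.

Lemma R_adj p q u v : (q %% (k.+1)%:Z)%Z = 1 -> Kadj k u v <-> Kadj k (Rm p q u) (Rm p q v).
Proof.
move=> Hq; split; first exact: R_adj1.
by move/(@R_adj1 p q _ _ Hq); rewrite !RmK.
Qed.

Lemma T_face p q f : (q %% (k.+1)%:Z)%Z = 0 -> tiling_face k f ->
  tiling_faceset k (map (Tm p q) f).
Proof.
move=> Hq; case/tiling_faceE => [[i [j [Sj ->]]]|[i [j [Sj [->|->]]]]].
- exists (sqF (i + p) (j + q)); split; first by apply: sqF_face; rewrite ST.
  have -> // : map (Tm p q) (sqF i j) = sqF (i + p) (j + q).
  by apply/eqP; rewrite /sqF /trA /trB /Tm /Rm /= !eqseq_cons !xpair_eqE /= !eqxx ?andbT; clear -i; lia.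
- exists (trA (i + p) (j + q)); split; first by apply: trA_face; rewrite ST.
  have -> // : map (Tm p q) (trA i j) = trA (i + p) (j + q).
  by apply/eqP; rewrite /sqF /trA /trB /Tm /Rm /= !eqseq_cons !xpair_eqE /= !eqxx ?andbT; clear -i; lia.
- exists (trB (i + p) (j + q)); split; first by apply: trB_face; rewrite ST.
  have -> // : map (Tm p q) (trB i j) = trB (i + p) (j + q).
  by apply/eqP; rewrite /sqF /trA /trB /Tm /Rm /= !eqseq_cons !xpair_eqE /= !eqxx ?andbT; clear -i; lia.
Qed.

Lemma R_face p q f : (q %% (k.+1)%:Z)%Z = 1 -> tiling_face k f ->
  tiling_faceset k (map (Rm p q) f).
Proof.
move=> Hq; case/tiling_faceE => [[i [j [Sj ->]]]|[i [j [Sj [->|->]]]]].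
- exists (sqF (p - i - 1) (q - j - 1)); split; first by apply: sqF_face; rewrite SR1.
  have -> : map (Rm p q) (sqF i j) = rot 2 (sqF (p - i - 1) (q - j - 1)).
    by apply/eqP; rewrite /sqF /trA /trB /Tm /Rm /= !eqseq_cons !xpair_eqE /= !eqxx ?andbT; clear -i; lia.
  by rewrite perm_rot.
- exists (trB (p - i - 1) (q - j - 1)); split; first by apply: trB_face; rewrite SR1.
  have -> : map (Rm p q) (trA i j) = rot 1 (trB (p - i - 1) (q - j - 1)).
    by apply/eqP; rewrite /sqF /trA /trB /Tm /Rm /= !eqseq_cons !xpair_eqE /= !eqxx ?andbT; clear -i; lia.
  by rewrite perm_rot.
- exists (trA (p - i - 1) (q - j - 1)); split; first by apply: trA_face; rewrite SR1.
  have -> : map (Rm p q) (trB i j) = rot 2 (trA (p - i - 1) (q - j - 1)).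
    by apply/eqP; rewrite /sqF /trA /trB /Tm /Rm /= !eqseq_cons !xpair_eqE /= !eqxx ?andbT; clear -i; lia.
  by rewrite perm_rot.
Qed.

End Maps.


Lemma ar_nb00 k (hk : k = 2%N \/ k = 3%N) a b : Kadj k (0, 0) (a, b) -> ~ (a = 0 /\ b = 1) ->
  (a = 1 /\ b = 0) \/ (a = -1 /\ b = 0) \/ (a = 0 /\ b = -1) \/ (a = 1 /\ b = -1).
Proof. rewrite /Kadj /=; case: hk => ->; klia. Qed.

Lemma ar_no01 k (hk : k = 2%N \/ k = 3%N) a b : Kadj k (0, 0) (a, b) -> Kadj k (0, 1) (a, b) -> False.
Proof. rewrite /Kadj /=; case: hk => ->; klia. Qed.

Lemma ar_cn0010 k (hk : k = 2%N \/ k = 3%N) a b : Kadj k (0, 0) (a, b) -> Kadj k (1, 0) (a, b) -> (a = 1) /\ (b = -1).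
Proof. rewrite /Kadj /=; case: hk => ->; klia. Qed.

Lemma ar_c11' k (hk : k = 2%N \/ k = 3%N) a b : Kadj k (-1, 0) (a, b) -> Kadj k (0, 1) (a, b) -> ~ (a = 0 /\ b = 0) ->
  (a = -1) /\ (b = 1).
Proof. rewrite /Kadj /=; case: hk => ->; klia. Qed.

Lemma ar_adj k x y : Kadj k x y -> Kadj k y x.
Proof. exact: Kadj_sym. Qed.


Lemma R_free k p q :
  (exists u, Rm p q u = u) \/
  (exists u v, [/\ tiling_adj k u v, Rm p q u = v & Rm p q v = u]) \/
  (exists f, tiling_face k f /\ perm_eq (map (Rm p q) f) f).
Proof.
have [Pe|Po] : (p %% 2)%Z = 0 \/ (p %% 2)%Z = 1 by lia.
- have [Qe|Qo] : (q %% 2)%Z = 0 \/ (q %% 2)%Z = 1 by lia.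
  + left; exists ((p %/ 2)%Z, (q %/ 2)%Z); rewrite /Rm /=; apply: pair_eqI; lia.
  + right; left; exists ((p %/ 2)%Z, (q %/ 2)%Z), ((p %/ 2)%Z, (q %/ 2)%Z + 1).
    split; [apply/adjP; kadj | rewrite /Rm /=; apply: pair_eqI; lia | rewrite /Rm /=; apply: pair_eqI; lia].
- have [Qe|Qo] : (q %% 2)%Z = 0 \/ (q %% 2)%Z = 1 by lia.
  + right; left; exists ((p %/ 2)%Z, (q %/ 2)%Z), ((p %/ 2)%Z + 1, (q %/ 2)%Z).
    split; [apply/adjP; kadj | rewrite /Rm /=; apply: pair_eqI; lia | rewrite /Rm /=; apply: pair_eqI; lia].
  + case S: (sq_strip k (q %/ 2)%Z).
    * right; right; exists (sqF (p %/ 2)%Z (q %/ 2)%Z); split; first by apply: sqF_face; rewrite S.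
      have -> : map (Rm p q) (sqF (p %/ 2)%Z (q %/ 2)%Z) = rot 2 (sqF (p %/ 2)%Z (q %/ 2)%Z).
        by apply/eqP; rewrite /sqF /Rm /= !eqseq_cons !xpair_eqE /= !eqxx ?andbT; clear S; lia.
      by rewrite perm_rot.
    * right; left; exists ((p %/ 2)%Z + 1, (q %/ 2)%Z), ((p %/ 2)%Z, (q %/ 2)%Z + 1).
      have NS : ~~ sq_strip k (q %/ 2)%Z by rewrite S.
      split; [apply/adjP; kadj | rewrite /Rm /=; apply: pair_eqI; lia | rewrite /Rm /=; apply: pair_eqI; lia].
Qed.

Section Cyc.
Variable T : eqType.
Implicit Types s t : seq T.

Lemma cyc_perm s t : cyc_eq s t -> perm_eq s t.
Proof.
case=> n [->|->]; first by rewrite perm_sym perm_rot.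
by rewrite perm_sym perm_rot perm_rev.
Qed.

Lemma cyc_uniq s t : cyc_eq s t -> uniq t -> uniq s.
Proof. by move/cyc_perm/perm_uniq ->. Qed.

Lemma cyc_dedge s t x y : uniq s -> cyc_eq s t -> dedge t x y ->
  dedge s x y \/ dedge s y x.
Proof.
move=> Us [n [->|->]]; first by rewrite dedge_rot //; left.
by rewrite dedge_rot ?rev_uniq // dedge_rev //; right.
Qed.

Lemma cyc_dedge' s t x y : uniq s -> cyc_eq s t -> dedge s x y ->
  dedge t x y \/ dedge t y x.
Proof.
move=> Us [n [->|->]] H; first by rewrite !dedge_rot //; left.
by rewrite !dedge_rot ?rev_uniq // !dedge_rev //; right.
Qed.

Lemma cyc_uedge s t x y : uniq s -> cyc_eq s t -> uedge t x y -> uedge s x y.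
Proof.
move=> Us C /orP[] /(cyc_dedge Us C) [] H; rewrite /uedge H ?orbT //.
Qed.

Lemma cyc_uedge' s t x y : uniq s -> cyc_eq s t -> uedge s x y -> uedge t x y.
Proof.
move=> Us C /orP[] /(cyc_dedge' Us C) [] H; rewrite /uedge H ?orbT //.
Qed.

Lemma cyc_orient s t : uniq s -> cyc_eq s t -> exists b : bool,
  forall x y, dedge s x y -> dedge t (if b then x else y) (if b then y else x).
Proof.
move=> Us [n [->|->]].
  by exists true => x y; rewrite dedge_rot.
by exists false => x y; rewrite dedge_rot ?rev_uniq // dedge_rev.
Qed.

End Cyc.

Lemma uniq_map_inj (T T' : eqType) (h : T -> T') s x y : uniq (map h s) ->
  x \in s -> y \in s -> h x = h y -> x = y.
Proof.
elim: s => //= z s IH /andP[Nz Us]; rewrite !inE.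
case/orP=> [/eqP->|xs]; case/orP=> [/eqP->|ys] // E.
- by move: Nz; rewrite E map_f.
- by move: Nz; rewrite -E map_f.
- exact: IH.
Qed.

Lemma dedge_map_inv (T T' : eqType) (h : T -> T') (s : seq T) x y : uniq s ->
  size s = 3%N \/ size s = 4%N -> dedge (map h s) x y ->
  exists a b, [/\ dedge s a b, h a = x & h b = y].
Proof.
case: s => [|a [|b [|c [|d [|e s]]]]] U Sz; try by case: Sz.
- case/dedge3I: U => H1 H2 H3; case/dedge3E => [[-> ->]|[-> ->]|[-> ->]];
  [exists a, b|exists b, c|exists c, a]; by split.
- case/dedge4I: U => H1 H2 H3 H4; case/dedge4E => [[-> ->]|[-> ->]|[-> ->]|[-> ->]];
  [exists a, b|exists b, c|exists c, d|exists d, a]; by split.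
Qed.

Section FaceMap.
Variable k : nat.
Variables (T' : eqType) (h : vtx -> T').

Lemma face_map_dedge f u v : tiling_face k f -> uniq (map h f) -> dedge f u v ->
  dedge (map h f) (h u) (h v).
Proof.
case/tiling_faceE => [[i [j [_ ->]]]|[i [j [_ [->|->]]]]]; rewrite /sqF /trA /trB /= => U.
- by case/dedge4I: U => H1 H2 H3 H4; case/dedge4E => [[-> ->]|[-> ->]|[-> ->]|[-> ->]].
- by case/dedge3I: U => H1 H2 H3; case/dedge3E => [[-> ->]|[-> ->]|[-> ->]].
- by case/dedge3I: U => H1 H2 H3; case/dedge3E => [[-> ->]|[-> ->]|[-> ->]].
Qed.

Lemma face_map_uedge f x y : tiling_face k f -> uedge (map h f) x y ->
  exists u v, [/\ h u = x, h v = y & Kadj k u v].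
Proof.
move=> Hf; have Uf := tiling_face_uniq Hf.
have Sz : size f = 3%N \/ size f = 4%N.
  by case/tiling_faceE: Hf => [[i [j [_ ->]]]|[i [j [_ [->|->]]]]]; [right|left|left].
case/orP=> /(dedge_map_inv Uf Sz) [a [b [D Ea Eb]]].
  exists a, b; split => //; apply: (face_adj Hf); by rewrite /uedge D.
exists b, a; split => //; apply: Kadj_sym; apply: (face_adj Hf); by rewrite /uedge D.
Qed.
End FaceMap.

Section Main.
Variables (k : nat) (G : (vtx -> vtx) -> Prop) (V : finType) (n : nat)
  (face : 'I_n -> seq V) (eta : vtx -> V).
Hypothesis hk : k = 2%N \/ k = 3%N.
Hypothesis HG : free_aut_subgroup k G.
Hypothesis HX : is_torus_polyhedral_map face.
Hypothesis HQ : is_quotient_map k G face eta.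

Lemma eta_surj x : exists u, eta u = x.
Proof. by case: HQ => H _; apply: H. Qed.
Lemma etaP u v : eta u = eta v <-> exists a, G a /\ a u = v.
Proof. by case: HQ => _ [H _]; apply: H. Qed.
Lemma eta_img f : tiling_face k f -> exists i, cyc_eq (map eta f) (face i).
Proof. by case: HQ => _ [_ [_ [H _]]]; apply: H. Qed.
Lemma eta_pre i : exists f, tiling_face k f /\ cyc_eq (map eta f) (face i).
Proof. by case: HQ => _ [_ [_ [_ [H _]]]]; apply: H. Qed.
Lemma eta_perm f g : tiling_face k f -> tiling_face k g ->
  (perm_eq (map eta f) (map eta g) <-> exists a, G a /\ perm_eq (map a f) g).
Proof. by case: HQ => _ [_ [_ [_ [_ H]]]]; apply: H. Qed.
Lemma face_uniq i : uniq (face i).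
Proof. by case: HX => H _; case: (H i). Qed.
Lemma face_inj i j : perm_eq (face i) (face j) -> i = j.
Proof. by case: HX => _ [H _]; apply: H. Qed.
Lemma etaG a u : G a -> eta (a u) = eta u.
Proof. by move=> Ga; symmetry; apply/etaP; exists a. Qed.
Lemma Gaut a : G a -> tiling_aut k a.
Proof. by case: HG => _ _ _ H _; apply: H. Qed.
Lemma Ginv a : G a -> exists b, [/\ G b, cancel a b & cancel b a].
Proof. by case: HG => _ _ H _ _; apply: H. Qed.
Lemma Gfree a : G a ->
  ((exists u, a u = u) \/
   (exists u v, [/\ tiling_adj k u v, a u = v & a v = u]) \/
   (exists f, tiling_face k f /\ perm_eq (map a f) f)) -> forall x, a x = x.
Proof. by case: HG => _ _ _ _ H; apply: H. Qed.

Lemma map_eta_uniq f i : cyc_eq (map eta f) (face i) -> uniq (map eta f).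
Proof. by move/cyc_uniq; apply; apply: face_uniq. Qed.

Lemma fadjE x y : fadj face x y <-> exists u v, [/\ eta u = x, eta v = y & Kadj k u v].
Proof.
split.
  case/existsP=> i Hi; case: (eta_pre i) => f [Hf C].
  have U := map_eta_uniq C.
  exact: (face_map_uedge (T' := V) Hf (cyc_uedge U C Hi)).
case=> u [v [<- <- A]]; case: (adj_face A) => f [Hf Hu].
case: (eta_img Hf) => i C; have U := map_eta_uniq C.
apply/existsP; exists i; apply: (cyc_uedge' U C).
case/orP: Hu => D; rewrite /uedge (face_map_dedge Hf U D) ?orbT //.
Qed.

(* descent of a normalizing automorphism of K *)
Lemma eta_surjb x : exists u, eta u == x.
Proof. by case: (eta_surj x) => u <-; exists u. Qed.
Definition lift x := xchoose (eta_surjb x).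
Lemma liftK x : eta (lift x) = x.
Proof. exact/eqP/(xchooseP (eta_surjb x)). Qed.

Section Descent.
Variables (s s' : vtx -> vtx).
Hypotheses (sK : cancel s s') (sK' : cancel s' s).
Hypotheses (sadj : forall u v, Kadj k u v -> Kadj k (s u) (s v))
           (sadj' : forall u v, Kadj k u v -> Kadj k (s' u) (s' v)).
Hypotheses (sface : forall f, tiling_face k f -> tiling_faceset k (map s f))
           (sface' : forall f, tiling_face k f -> tiling_faceset k (map s' f)).
Hypotheses (snorm : forall g, G g -> exists g', G g' /\ forall x, s (g x) = g' (s x))
           (snorm' : forall g, G g -> exists g', G g' /\ forall x, s' (g x) = g' (s' x)).

Lemma desc_wd u v : eta u = eta v -> eta (s u) = eta (s v).
Proof.
case/etaP=> a [Ga <-]; case: (snorm Ga) => g' [Gg' E].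
by rewrite E (etaG _ Gg').
Qed.
Lemma desc_wd' u v : eta u = eta v -> eta (s' u) = eta (s' v).
Proof.
case/etaP=> a [Ga <-]; case: (snorm' Ga) => g' [Gg' E].
by rewrite E (etaG _ Gg').
Qed.

Definition phi x := eta (s (lift x)).
Definition psi x := eta (s' (lift x)).
Lemma phiE u : phi (eta u) = eta (s u).
Proof. by apply: desc_wd; rewrite liftK. Qed.
Lemma psiE u : psi (eta u) = eta (s' u).
Proof. by apply: desc_wd'; rewrite liftK. Qed.
Lemma phiK : cancel phi psi.
Proof. by move=> x; case: (eta_surj x) => u <-; rewrite phiE psiE sK. Qed.

Lemma phi_fadj x y : fadj face x y -> fadj face (phi x) (phi y).
Proof.
case/fadjE=> u [v [<- <- A]]; apply/fadjE; exists (s u), (s v).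
by rewrite !phiE; split => //; apply: sadj.
Qed.
Lemma psi_fadj x y : fadj face x y -> fadj face (psi x) (psi y).
Proof.
case/fadjE=> u [v [<- <- A]]; apply/fadjE; exists (s' u), (s' v).
by rewrite !psiE; split => //; apply: sadj'.
Qed.

Lemma exists_desc : exists a : {perm V}, fin_map_aut face a /\ forall u, a (eta u) = eta (s u).
Proof.
exists (perm (can_inj phiK)); split; last by move=> u; rewrite permE phiE.
split.
  move=> x y; rewrite !permE; apply/idP/idP; last exact: phi_fadj.
  by move/psi_fadj; rewrite !phiK.
move=> i; case: (eta_pre i) => f [Hf C].
case: (sface Hf) => f' [Hf' P]; case: (eta_img Hf') => j C'.
exists j.
set A := perm (can_inj phiK).
have P1 : perm_eq (map A (face i)) (map A (map eta f)).
  by apply: perm_map; rewrite perm_sym; apply: cyc_perm.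
have P2 : map A (map eta f) = map eta (map s f).
  by rewrite -!map_comp; apply: eq_map => u /=; rewrite permE phiE.
have P3 : perm_eq (map eta (map s f)) (map eta f') by apply: perm_map.
have P4 : perm_eq (map eta f') (face j) by apply: cyc_perm.
by rewrite (permPl P1) P2 (permPl P3).
Qed.
End Descent.

Lemma dedge_first (T : eqType) (x0 x1 x2 : T) r : uniq [:: x0, x1, x2 & r] ->
  dedge [:: x0, x1, x2 & r] x0 x1 /\ dedge [:: x0, x1, x2 & r] x1 x2.
Proof.
rewrite /= !inE negb_or => /andP[/andP[N01 _] _].
rewrite /dedge /= !inE !eqxx /= ?orbT; split => //.
by rewrite [x1 == x0]eq_sym (negbTE N01) eqxx.
Qed.

Section Orient.
Variable o : 'I_n -> bool.
Hypothesis ocoh : forall i j u v, i != j ->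
  dedge (orient face o i) u v -> dedge (orient face o j) u v -> False.

Definition sgn (L : seq V) (i : 'I_n) (b : bool) :=
  perm_eq L (face i) /\ forall x y, dedge L x y ->
    dedge (orient face o i) (if b then x else y) (if b then y else x).

Lemma orientE i x y : dedge (orient face o i) x y =
  (if o i then dedge (face i) x y else dedge (face i) y x).
Proof. by rewrite /orient; case: (o i) => //; rewrite dedge_rev // face_uniq. Qed.

Lemma sgn_ex f : tiling_face k f -> exists i b, sgn (map eta f) i b.
Proof.
move=> Hf; case: (eta_img Hf) => i C; have U := map_eta_uniq C.
case: (cyc_orient U C) => b0 H; exists i, (b0 == o i); split; first exact: cyc_perm.
move=> x y D; rewrite orientE; move: (H x y D); clear H.
by case: b0; case: (o i).
Qed.

Lemma sgn_uniq L i b : sgn L i b -> uniq L.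
Proof. by case=> P _; rewrite (perm_uniq P) face_uniq. Qed.

Lemma sgn_step f f' u v w i b i' b' : tiling_face k f -> tiling_face k f' ->
  dedge f u v -> dedge f' v u -> w \in f' -> w \notin f ->
  sgn (map eta f) i b -> sgn (map eta f') i' b' -> b = b'.
Proof.
move=> Hf Hf' Duv Dvu wf' wf S1 S2.
have U1 := sgn_uniq S1; have U2 := sgn_uniq S2.
case: S1 => P1 D1; case: S2 => P2 D2.
have E1 := D1 _ _ (face_map_dedge Hf U1 Duv).
have E2 := D2 _ _ (face_map_dedge Hf' U2 Dvu).
case: (b =P b') => // Nb; exfalso.
have Same : dedge (orient face o i') (if b then eta u else eta v) (if b then eta v else eta u).
  by move: Nb E2; clear D1 D2 E1; case: b; case: b'.
case: (i =P i') => [Eii|Nii]; last by apply: (ocoh (introN eqP Nii) E1 Same).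
subst i'.
have P12 : perm_eq (map eta f) (map eta f') by rewrite (permPl P1) perm_sym.
case/(eta_perm Hf Hf'): P12 => a [Ga Pa].
case: (dedge_mem Dvu) => _ uf'.
have : u \in map a f by rewrite (perm_mem Pa).
case/mapP=> w0 w0f Eu.
case: (dedge_mem Duv) => uf _.
have Ew : eta w0 = eta u by rewrite Eu etaG.
have Ew0 := uniq_map_inj U1 w0f uf Ew.
have Hfix : forall x, a x = x by apply: (Gfree Ga); left; exists u; rewrite -{1}Ew0 -Eu.
have : map a f = f by rewrite (eq_map Hfix) map_id.
by move=> Ef; move: Pa; rewrite Ef => /perm_mem Pm; move: wf; rewrite Pm wf'.
Qed.

Definition SameSg (f g : seq vtx) := forall i b i' b',
  sgn (map eta f) i b -> sgn (map eta g) i' b' -> b = b'.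

Lemma SameSg_sym f g : SameSg f g -> SameSg g f.
Proof. by move=> H i b i' b' S1 S2; symmetry; apply: H S2 S1. Qed.

Lemma SameSg_trans f g h : tiling_face k g -> SameSg f g -> SameSg g h -> SameSg f h.
Proof.
move=> Hg H1 H2 i b i' b' S1 S3; case: (sgn_ex Hg) => j [c S2].
by rewrite (H1 _ _ _ _ S1 S2) (H2 _ _ _ _ S2 S3).
Qed.

Lemma SameSg_step f f' u v w w' : tiling_face k f -> tiling_face k f' ->
  dedge f u v -> dedge f' v u -> w \in f' -> w \notin f -> w' \in f -> w' \notin f' ->
  SameSg f f'.
Proof. by move=> *; move=> ????; apply: sgn_step; eauto. Qed.

Ltac memt := rewrite /sqF /trA /trB !inE !xpair_eqE /=; lia.

Lemma H_step i j : sq_strip k j -> SameSg (sqF i j) (sqF (i + 1) j).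
Proof.
move=> Sj; apply: (@SameSg_step _ _ (i + 1, j) (i + 1, j + 1) (i + 1 + 1, j) (i, j)).
- exact: sqF_face.
- exact: sqF_face.
- by case/dedge4I: (sqF_uniq i j).
- by case/dedge4I: (sqF_uniq (i + 1) j).
all: memt.
Qed.

Lemma V1_step i j : sq_strip k j -> ~~ sq_strip k (j + 1) ->
  SameSg (sqF i j) (trA i (j + 1)).
Proof.
move=> Sj Sj1; apply: (@SameSg_step _ _ (i + 1, j + 1) (i, j + 1) (i, j + 1 + 1) (i, j)).
- exact: sqF_face.
- exact: trA_face.
- by case/dedge4I: (sqF_uniq i j).
- by case/dedge3I: (trA_uniq i (j + 1)).
all: memt.
Qed.

Lemma V2_step i j : ~~ sq_strip k j -> SameSg (trA i j) (trB i j).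
Proof.
move=> Sj; apply: (@SameSg_step _ _ (i + 1, j) (i, j + 1) (i + 1, j + 1) (i, j)).
- exact: trA_face.
- exact: trB_face.
- by case/dedge3I: (trA_uniq i j).
- by case/dedge3I: (trB_uniq i j).
all: memt.
Qed.

Lemma V3_step i j : ~~ sq_strip k j -> ~~ sq_strip k (j + 1) ->
  SameSg (trB i j) (trA i (j + 1)).
Proof.
move=> Sj Sj1; apply: (@SameSg_step _ _ (i + 1, j + 1) (i, j + 1) (i, j + 1 + 1) (i + 1, j)).
- exact: trB_face.
- exact: trA_face.
- by case/dedge3I: (trB_uniq i j).
- by case/dedge3I: (trA_uniq i (j + 1)).
all: memt.
Qed.

Lemma V4_step i j : ~~ sq_strip k j -> sq_strip k (j + 1) ->
  SameSg (trB i j) (sqF i (j + 1)).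
Proof.
move=> Sj Sj1; apply: (@SameSg_step _ _ (i + 1, j + 1) (i, j + 1) (i + 1, j + 1 + 1) (i + 1, j)).
- exact: trB_face.
- exact: sqF_face.
- by case/dedge3I: (trB_uniq i j).
- by case/dedge4I: (sqF_uniq i (j + 1)).
all: memt.
Qed.

Lemma Vert i j : sq_strip k j -> SameSg (sqF i j) (sqF i (j + (k.+1)%:Z)).
Proof.
move=> Sj; case: hk => Ek.
- have S1 : ~~ sq_strip k (j + 1) by move: Sj; rewrite /sq_strip Ek; lia.
  have S2 : ~~ sq_strip k (j + 1 + 1) by move: Sj; rewrite /sq_strip Ek; lia.
  have S3 : sq_strip k (j + 1 + 1 + 1) by move: Sj; rewrite /sq_strip Ek; lia.
  have -> : j + (k.+1)%:Z = j + 1 + 1 + 1 by rewrite Ek; lia.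
  apply: (SameSg_trans (trA_face i S1) (V1_step (i:=i) Sj S1)).
  apply: (SameSg_trans (trB_face i S1) (V2_step (i:=i) S1)).
  apply: (SameSg_trans (trA_face i S2) (V3_step (i:=i) S1 S2)).
  apply: (SameSg_trans (trB_face i S2) (V2_step (i:=i) S2)).
  exact: (V4_step (i:=i) S2 S3).
- have S1 : ~~ sq_strip k (j + 1) by move: Sj; rewrite /sq_strip Ek; lia.
  have S2 : ~~ sq_strip k (j + 1 + 1) by move: Sj; rewrite /sq_strip Ek; lia.
  have S3 : ~~ sq_strip k (j + 1 + 1 + 1) by move: Sj; rewrite /sq_strip Ek; lia.
  have S4 : sq_strip k (j + 1 + 1 + 1 + 1) by move: Sj; rewrite /sq_strip Ek; lia.
  have -> : j + (k.+1)%:Z = j + 1 + 1 + 1 + 1 by rewrite Ek; lia.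
  apply: (SameSg_trans (trA_face i S1) (V1_step (i:=i) Sj S1)).
  apply: (SameSg_trans (trB_face i S1) (V2_step (i:=i) S1)).
  apply: (SameSg_trans (trA_face i S2) (V3_step (i:=i) S1 S2)).
  apply: (SameSg_trans (trB_face i S2) (V2_step (i:=i) S2)).
  apply: (SameSg_trans (trA_face i S3) (V3_step (i:=i) S2 S3)).
  apply: (SameSg_trans (trB_face i S3) (V2_step (i:=i) S3)).
  exact: (V4_step (i:=i) S3 S4).
Qed.

Lemma sgn_excl L i b i' b' x0 x1 x2 r : L = [:: x0, x1, x2 & r] ->
  sgn L i b -> sgn L i' b' -> b = b'.
Proof.
move=> EL S1 S2; have U := sgn_uniq S1.
case: S1 => P1 D1; case: S2 => P2 D2.
have Eii : i = i'.
  by apply: face_inj; rewrite -(permPl P1).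
subst i'.
have U' : uniq [:: x0, x1, x2 & r] by rewrite -EL.
have [D01 D12] := dedge_first U'.
rewrite -EL in D01 D12.
have A1 := D1 _ _ D01; have A2 := D1 _ _ D12.
have B1 := D2 _ _ D01; have B2 := D2 _ _ D12.
move: U; rewrite EL /= !inE !negb_or => /andP[/and3P[N01 N02 _] _].
case: b b' A1 A2 B1 B2 {D1 D2} => [] [] //= A1 A2 B1 B2.
- by move: N02; rewrite (dedge_fun A2 B1) eqxx.
- by move: N02; rewrite (dedge_fun B2 A1) eqxx.
Qed.

Lemma SameSg_refl f : tiling_face k f -> SameSg f f.
Proof.
case/tiling_faceE => [[i [j [_ ->]]]|[i [j [_ [->|->]]]]] ????;
  rewrite /sqF /trA /trB /=; exact: sgn_excl.
Qed.

Lemma Hor j : sq_strip k j -> forall i, SameSg (sqF 0 j) (sqF i j).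
Proof.
move=> Sj; apply: int_ind2; first exact: (SameSg_refl (sqF_face 0 Sj)).
- move=> i H; exact: (SameSg_trans (sqF_face i Sj) H (H_step (i:=i) Sj)).
- move=> i H; apply: (SameSg_trans (sqF_face i Sj) H).
  apply: SameSg_sym; have := H_step (i:=i - 1) Sj; by rewrite subrK.
Qed.

Lemma PosAll i j : sq_strip k j -> SameSg (sqF 0 0) (sqF i j).
Proof.
have S0 : sq_strip k 0 by rewrite /sq_strip; case: hk => ->.
have Vm : forall m, SameSg (sqF 0 0) (sqF 0 (m * (k.+1)%:Z)).
  have Sm : forall m, sq_strip k (m * (k.+1)%:Z) by move=> m; rewrite /sq_strip; case: hk => ->; lia.
  apply: int_ind2; first by rewrite mul0r; exact: (SameSg_refl (sqF_face 0 S0)).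
  - move=> m H; apply: (SameSg_trans (sqF_face 0 (Sm m)) H).
    by rewrite mulrDl mul1r; apply: Vert.
  - move=> m H; apply: (SameSg_trans (sqF_face 0 (Sm m)) H).
    apply: SameSg_sym; have := Vert (i:=0) (Sm (m - 1)).
    by rewrite mulrBl mul1r subrK.
move=> Sj.
have Ej : j = (j %/ (k.+1)%:Z)%Z * (k.+1)%:Z by move: Sj; rewrite /sq_strip; case: hk => ->; lia.
apply: (SameSg_trans (sqF_face 0 Sj)); last exact: Hor Sj i.
by rewrite [X in SameSg _ (sqF 0 X)]Ej; apply: Vm.
Qed.

End Orient.

Ltac kadjc hk := rewrite /Kadj /=; case: hk => ->; sred; lia.

Lemma S0 : sq_strip k 0.
Proof. by rewrite /sq_strip; case: hk => ->. Qed.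

Lemma orient_core o (ocoh : forall i j u v, i != j ->
  dedge (orient face o i) u v -> dedge (orient face o j) u v -> False)
  (L0 L1 : seq V) i0 b0 i1 b1 (x00 x10 x01 x11 : V) : L0 = [:: x00; x10; x11; x01] ->
  sgn o L0 i0 b0 -> sgn o L1 i1 b1 -> b0 = b1 -> perm_eq L0 L1 ->
  dedge L1 x10 x00 -> dedge L1 x00 x01 -> False.
Proof.
move=> EL S0' S1' Eb P D1a D1b; subst b1.
have U := sgn_uniq S0'.
have Eii : i0 = i1.
  case: S0' => P0 _; case: S1' => P1 _.
  by apply: face_inj; rewrite -(permPl P0) (permPl P).
subst i1.
have U' : uniq [:: x00; x10; x11; x01] by rewrite -EL.
case/dedge4I: (U') => D0a _ _ D0b; rewrite -EL in D0a D0b.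
case: S0' => _ H0; case: S1' => _ H1.
have A1 := H0 _ _ D0a; have A2 := H0 _ _ D0b.
have B1 := H1 _ _ D1a; have B2 := H1 _ _ D1b.
have N : x10 != x01.
  by apply/eqP => E; move: U'; rewrite E /= !inE !eqxx /= ?orbT ?andbF.
case: b0 A1 A2 B1 B2 {H0 H1} => /= A1 A2 B1 B2.
- by move: N; rewrite (dedge_fun A1 B2) eqxx.
- by move: N; rewrite (dedge_fun B1 A2) eqxx.
Qed.

Lemma orient_contra g i1 j1 : G g -> sq_strip k j1 ->
  ([/\ g (0, 0) = (i1 + 1, j1), g (1, 0) = (i1, j1), g (0, 1) = (i1 + 1, j1 + 1)
     & g (1, 1) = (i1, j1 + 1)] \/
   [/\ g (0, 0) = (i1, j1 + 1), g (1, 0) = (i1 + 1, j1 + 1), g (0, 1) = (i1, j1)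
     & g (1, 1) = (i1 + 1, j1)]) -> False.
Proof.
move=> Gg Sj1 Hc.
case: HX => _ [_ [_ [_ [_ [_ [_ [[o ocoh] _]]]]]]].
have HF0 := sqF_face 0 S0; have HF1 := sqF_face i1 Sj1.
case: (sgn_ex o HF0) => i0 [b0 S0']; case: (sgn_ex o HF1) => i1' [b1 S1'].
have Eb := PosAll ocoh (i:=i1) Sj1 S0' S1'.
have EL0 : map eta (sqF 0 0) = [:: eta (0, 0); eta (1, 0); eta (1, 1); eta (0, 1)].
  by rewrite /sqF /= !add0r.
have E1 : forall x, eta (g x) = eta x by move=> x; apply: etaG.
case: Hc => [[H00 H10 H01 H11]|[H00 H10 H01 H11]].
- have EL1 : map eta (sqF i1 j1) = [:: eta (1, 0); eta (0, 0); eta (0, 1); eta (1, 1)].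
    by rewrite /sqF /= -H00 -H10 -H01 -H11 !E1.
  have U1 := sgn_uniq S1'; rewrite EL1 in U1.
  case/dedge4I: (U1) => D1a D1b _ _.
  apply: (orient_core ocoh EL0 S0' S1' Eb); rewrite ?EL1 ?EL0 //.
  have -> : [:: eta (1, 0); eta (0, 0); eta (0, 1); eta (1, 1)] =
    rot 2 (rev [:: eta (0, 0); eta (1, 0); eta (1, 1); eta (0, 1)]) by [].
  by rewrite perm_sym perm_rot perm_rev.
- have EL1 : map eta (sqF i1 j1) = [:: eta (0, 1); eta (1, 1); eta (1, 0); eta (0, 0)].
    by rewrite /sqF /= -H00 -H10 -H01 -H11 !E1.
  have U1 := sgn_uniq S1'; rewrite EL1 in U1.
  case/dedge4I: (U1) => _ _ D1a D1b.
  apply: (orient_core ocoh EL0 S0' S1' Eb); rewrite ?EL1 ?EL0 //.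
  have -> : [:: eta (0, 1); eta (1, 1); eta (1, 0); eta (0, 0)] =
    rev [:: eta (0, 0); eta (1, 0); eta (1, 1); eta (0, 1)] by [].
  by rewrite perm_sym perm_rev.
Qed.


Lemma stab_cases g h h' : G g -> cancel h h' -> cancel h' h ->
  (forall u v, Kadj k u v -> Kadj k (h' u) (h' v)) ->
  (forall u v, Kadj k (h' u) (h' v) -> Kadj k u v) ->
  h' (g (0, 0)) = (0, 0) ->
  (forall x, g x = h x) \/
  [/\ g (1, 0) = h (-1, 0), g (0, 1) = h (0, 1) & g (1, 1) = h (-1, 1)].
Proof.
move=> Gg hK hK' h'adj h'adjr c00.
case: (Gaut Gg) => bi [gK bK gadjT _].
have gadj : forall u v, Kadj k u v <-> Kadj k (g u) (g v).
  by move=> u v; rewrite -!adjP; apply: gadjT.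
pose c x := h' (g x); pose c' x := bi (h x).
have cK : cancel c c' by move=> x; rewrite /c /c' hK' gK.
have cK' : cancel c' c by move=> x; rewrite /c /c' bK hK.
have cadj : forall u v, Kadj k u v -> Kadj k (c u) (c v).
  by move=> u v /(gadj u v).1 /h'adj.
have cadjr : forall u v, Kadj k (c u) (c v) -> Kadj k u v.
  by move=> u v /h'adjr /(gadj u v).2.
have cinj := can_inj cK.
have c00' : c (0, 0) = (0, 0) by [].
have back : forall y x, Kadj k y (c x) -> Kadj k (c' y) x.
  by move=> y x A; apply: cadjr; rewrite cK'.
have c01 : c (0, 1) = (0, 1).
  have noy : forall y, Kadj k (0, 0) y -> Kadj k (c (0, 1)) y -> False.
    move=> y A1 A2.
    have B1 : Kadj k (c' y) (0, 0) by apply: back; rewrite c00'; apply: Kadj_sym.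
    have B2 : Kadj k (c' y) (0, 1) by apply: back; apply: Kadj_sym.
    move: B1 B2; case: (c' y) => za zb B1 B2.
    exact: (ar_no01 hk (Kadj_sym B1) (Kadj_sym B2)).
  have A : Kadj k (0, 0) (c (0, 1)) by rewrite -c00'; apply: cadj; kadj.
  move: noy A; case: (c (0, 1)) => a b noy A.
  have [[-> ->]|N] : (a = 0 /\ b = 1) \/ ~ (a = 0 /\ b = 1) by lia.
    by [].
  exfalso.
  case: (ar_nb00 hk A N) => [[Ea Eb]|[[Ea Eb]|[[Ea Eb]|[Ea Eb]]]]; subst a b.
  - by apply: (noy (1, -1)); kadjc hk.
  - by apply: (noy (0, -1)); kadjc hk.
  - by apply: (noy (1, -1)); kadjc hk.
  - by apply: (noy (0, -1)); kadjc hk.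
have c10 : c (1, 0) = (1, 0) \/ c (1, 0) = (-1, 0).
  have no2 : forall y1 y2, y1 <> y2 -> Kadj k (0, 0) y1 -> Kadj k (0, 0) y2 ->
      Kadj k (c (1, 0)) y1 -> Kadj k (c (1, 0)) y2 -> False.
    move=> y1 y2 N A1 A2 A3 A4.
    have Z : forall y, Kadj k (0, 0) y -> Kadj k (c (1, 0)) y -> c' y = (1, -1).
      move=> y B1 B2.
      have C1 : Kadj k (c' y) (0, 0) by apply: back; rewrite c00'; apply: Kadj_sym.
      have C2 : Kadj k (c' y) (1, 0) by apply: back; apply: Kadj_sym.
      move: C1 C2; case: (c' y) => za zb C1 C2.
      by case: (ar_cn0010 hk (Kadj_sym C1) (Kadj_sym C2)) => -> ->.
    apply: N; by rewrite -(cK' y1) -(cK' y2) (Z _ A1 A3) (Z _ A2 A4).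
  have A : Kadj k (0, 0) (c (1, 0)) by rewrite -c00'; apply: cadj; kadj.
  have N0 : c (1, 0) <> (0, 1) by rewrite -c01 => /cinj.
  move: no2 A N0; case: (c (1, 0)) => a b no2 A N0; move/pair_neq: N0 => N0.
  case: (ar_nb00 hk A N0) => [[Ea Eb]|[[Ea Eb]|[[Ea Eb]|[Ea Eb]]]]; subst a b.
  - by left.
  - by right.
  - exfalso; apply: (no2 (1, -1) (-1, 0)); try kadjc hk.
    by apply: pair_neqI; lia.
  - exfalso; apply: (no2 (1, 0) (0, -1)); try kadjc hk.
    by apply: pair_neqI; lia.
have gE : forall x, g x = h (c x) by move=> x; rewrite /c hK'.
case: c10 => c10.
  left => x; rewrite gE; congr h; exact: (rigid_all hk cK cadj c00' c10 c01).
right.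
have c11 : c (1, 1) = (-1, 1).
  have A1 : Kadj k (c (1, 0)) (c (1, 1)) by apply: cadj; kadj.
  have A2 : Kadj k (c (0, 1)) (c (1, 1)) by apply: cadj; kadj.
  rewrite c10 in A1; rewrite c01 in A2.
  have N : c (1, 1) <> (0, 0) by rewrite -c00' => /cinj.
  move: A1 A2 N; case: (c (1, 1)) => a b A1 A2 N; move/pair_neq: N => N.
  by case: (ar_c11' hk A1 A2 N) => -> ->.
by split; rewrite gE ?c10 ?c01 ?c11.
Qed.


Lemma classify g : G g -> exists p q, (q %% (k.+1)%:Z)%Z = 0 /\ forall x, g x = Tm p q x.
Proof.
move=> Gg; case: (Gaut Gg) => bi [gK bK gadjT gfaceT].
case E00: (g (0, 0)) => [p q].
have Hq : (q %% (k.+1)%:Z)%Z = 0 \/ (q %% (k.+1)%:Z)%Z = 1.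
  have F : tiling_faceset k (map g (sqF 0 0)).
    by apply: (gfaceT _).1; exists (sqF 0 0); split; [exact: sqF_face 0 S0 | exact: perm_refl].
  case: F => f' [Hf' P].
  have M : (p, q) \in f' by rewrite -(perm_mem P) -E00 map_f // /sqF inE eqxx.
  have Sz : size f' = 4%N by rewrite -(perm_size P) size_map.
  case/tiling_faceE: Hf' M Sz => [[i [j [Sj ->]]]|[i [j [Sj [->|->]]]]] // M _.
  by move: M Sj; rewrite /sqF !inE !xpair_eqE /sq_strip; case: hk => ->; lia.
case: Hq => Hq.
- have Hq' := Tmod hk Hq.
  have h'adj : forall u v, Kadj k u v -> Kadj k (Tm (- p) (- q) u) (Tm (- p) (- q) v).
    by move=> u v; apply: T_adj1.
  have h'adjr : forall u v, Kadj k (Tm (- p) (- q) u) (Tm (- p) (- q) v) -> Kadj k u v.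
    by move=> u v /(T_adj1 hk p Hq); rewrite !TmK'.
  have c00 : Tm (- p) (- q) (g (0, 0)) = (0, 0) by rewrite E00 /Tm /= !addrN.
  case: (stab_cases Gg (TmK p q) (TmK' p q) h'adj h'adjr c00) => [H|[H10 H01 H11]].
    by exists p, q; split.
  exfalso; apply: (orient_contra (i1 := p - 1) (j1 := q) Gg).
    by rewrite /sq_strip Hq.
  left; rewrite E00 H10 H01 H11 /Tm /=; split; apply: pair_eqI; lia.
- have h'adj : forall u v, Kadj k u v -> Kadj k (Rm p q u) (Rm p q v).
    by move=> u v; apply: R_adj1.
  have h'adjr : forall u v, Kadj k (Rm p q u) (Rm p q v) -> Kadj k u v.
    by move=> u v /(R_adj1 hk p Hq); rewrite !RmK.
  have c00 : Rm p q (g (0, 0)) = (0, 0) by rewrite E00 /Rm /= !subrr.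
  case: (stab_cases Gg (RmK p q) (RmK p q) h'adj h'adjr c00) => [H|[H10 H01 H11]].
    exfalso.
    have Hfix : forall x, g x = x.
      apply: (Gfree Gg); case: (R_free k p q) => [[u Hu]|[[u [v [A Eu Ev]]]|[f [Hf P]]]].
      + by left; exists u; rewrite H.
      + by right; left; exists u, v; rewrite !H.
      + by right; right; exists f; split => //; rewrite (eq_map H).
    by move: E00; rewrite Hfix => -[_ Eq]; move: Hq; rewrite -Eq; case: hk => ->.
  exfalso; apply: (orient_contra (i1 := p) (j1 := q - 1) Gg).
    by rewrite /sq_strip; move: Hq; case: hk => ->; lia.
  right; rewrite E00 H10 H01 H11 /Rm /=; split; apply: pair_eqI; lia.
Qed.


Lemma T_normal p q g : G g -> exists g', G g' /\ forall x, Tm p q (g x) = g' (Tm p q x).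
Proof.
move=> Gg; exists g; split => // x.
case: (classify Gg) => p' [q' [_ H]]; rewrite !H.
by case: x => a b; rewrite /Tm /=; apply: pair_eqI; lia.
Qed.

Lemma R_normal p q g : G g -> exists g', G g' /\ forall x, Rm p q (g x) = g' (Rm p q x).
Proof.
move=> Gg; case: (Ginv Gg) => bi [Gb gK bK]; exists bi; split => // x.
case: (classify Gg) => p' [q' [_ H]].
have Eb : forall y, bi y = Tm (- p') (- q') y.
  by move=> y; rewrite -{1}(TmK' p' q' y) -H gK.
by rewrite H Eb; case: x => a b; rewrite /Tm /Rm /=; apply: pair_eqI; lia.
Qed.

Lemma orbitT p q x0 : (q %% (k.+1)%:Z)%Z = 0 ->
  same_aut_orbit face (eta x0) (eta (Tm p q x0)).
Proof.
move=> Hq; have Hq' := Tmod hk Hq.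
have [a [Ha Hae]] := exists_desc (TmK p q)
  (fun u v => T_adj1 hk p Hq) (fun u v => T_adj1 hk (- p) Hq')
  (fun f => T_face hk p Hq)
  (fun g => T_normal p q (g := g)) (fun g => T_normal (- p) (- q) (g := g)).
by exists a; split.
Qed.

Lemma orbitR p q x0 : (q %% (k.+1)%:Z)%Z = 1 ->
  same_aut_orbit face (eta x0) (eta (Rm p q x0)).
Proof.
move=> Hq.
have [a [Ha Hae]] := exists_desc (RmK p q)
  (fun u v => R_adj1 hk p Hq) (fun u v => R_adj1 hk p Hq)
  (fun f => R_face hk p Hq)
  (fun g => R_normal p q (g := g)) (fun g => R_normal p q (g := g)).
by exists a; split.
Qed.

Lemma main_result : exists u v : V,
  ~ same_aut_orbit face u v /\
  forall w : V, same_aut_orbit face u w \/ same_aut_orbit face v w.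
Proof.
exists (eta (0, 0)), (eta (0, 2)); split.
  case=> a [[_ Hface] Ea].
  have HF0 := sqF_face 0 S0.
  case: (eta_img HF0) => i C.
  have Mu : eta (0, 0) \in face i.
    by rewrite -(perm_mem (cyc_perm C)) map_f // /sqF inE eqxx.
  case: (Hface i) => j P.
  have Mv : eta (0, 2) \in face j by rewrite -(perm_mem P) -Ea map_f.
  have Szj : size (face j) = 4%N.
    by rewrite -(perm_size P) size_map -(perm_size (cyc_perm C)) size_map.
  case: (eta_pre j) => f' [Hf' C'].
  have Szf : size f' = 4%N by rewrite -Szj -(perm_size (cyc_perm C')) size_map.
  have : eta (0, 2) \in map eta f' by rewrite (perm_mem (cyc_perm C')).
  case/mapP=> w wf' Ew.
  case/etaP: Ew => g [Gg Eg].
  case: (classify Gg) => p' [q' [Hq' H]].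
  rewrite H /Tm /= in Eg; subst w.
  case/tiling_faceE: Hf' wf' Szf => [[i' [j' [Sj ->]]]|[i' [j' [Sj [->|->]]]]] // M _.
  by move: M Sj Hq'; rewrite /sqF !inE !xpair_eqE /sq_strip; case: hk => ->; lia.
move=> w; case: (eta_surj w) => -[i j] <-.
have : [\/ (j %% (k.+1)%:Z)%Z = 0, (j %% (k.+1)%:Z)%Z = 1, ((j - 2) %% (k.+1)%:Z)%Z = 0
         | ((j + 2) %% (k.+1)%:Z)%Z = 1].
  case: hk => ->.
    have : (j %% 3)%Z = 0 \/ (j %% 3)%Z = 1 \/ ((j - 2) %% 3)%Z = 0 by lia.
    by case=> [H|[H|H]]; [constructor 1|constructor 2|constructor 3].
  have : (j %% 4)%Z = 0 \/ (j %% 4)%Z = 1 \/ ((j - 2) %% 4)%Z = 0 \/ ((j + 2) %% 4)%Z = 1 by lia.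
  by case=> [H|[H|[H|H]]]; [constructor 1|constructor 2|constructor 3|constructor 4].
case=> H.
- left; have := orbitT i (0, 0) H; rewrite /Tm /= !add0r; exact.
- left; have := orbitR i (0, 0) H; rewrite /Rm /= !subr0; exact.
- right; have := orbitT i (0, 2) H; rewrite /Tm /= add0r (_ : 2 + (j - 2) = j) //; lia.
- right; have := orbitR i (0, 2) H; rewrite /Rm /= subr0 (_ : j + 2 - 2 = j) //; lia.
Qed.

End Main.


Local Close Scope ring_scope.

Theorem theorem1 (k : nat) (hk : k = 2%N \/ k = 3%N)
    (G : (vtx -> vtx) -> Prop) (V : finType) (n : nat)
    (face : 'I_n -> seq V) (eta : vtx -> V) :
  free_aut_subgroup k G ->
  is_torus_polyhedral_map face ->
  is_quotient_map k G face eta ->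
  exists u v : V,
    ~ same_aut_orbit face u v /\
    forall w : V, same_aut_orbit face u w \/ same_aut_orbit face v w.
Proof.
move=> HG HX HQ; exact: (main_result hk HG HX HQ).
Qed.
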